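(* Let $S$ be the group defined in the context. Then $S$ contains no subgroup isomorphic to $(\mathbb{Z}/2)^5$. The group $S$ contains exactly eight subgroups isomorphic to $(\mathbb{Z}/2)^4$. These form three conjugacy classes in $S$: two classes contain two subgroups each, and one class contains four subgroups.
   Context: Let $S$ be the group generated by $v_1,v_2,v_3,s,t$, where $v_1,v_2,v_3$ commute, each has order $4$, and together generate $(\mathbb{Z}/4)^3$. The elements $s,t$ generate $D_8=\langle t,s\mid t^2=s^4=(ts)^2=1\rangle$, which acts on $(\mathbb{Z}/4)^3$ by conjugation. Writing $x^y=yxy^{-1}$, the action is $$v_1^t=v_3^{-1},\quad v_2^t=v_2^{-1},\quad v_1^s=v_2,\quad v_2^s=v_3,\quad v_3^s=v_2^{-1}v_1v_3.$$ So $S=(\mathbb{Z}/4)^3\rtimes D_8$ has order $2^9$. *)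

(* Defs.v *)
From HB Require Import structures.
From mathcomp Require Import all_boot all_order all_algebra all_fingroup all_solvable.
Set Implicit Arguments. Unset Strict Implicit. Unset Printing Implicit Defensive.
Import GRing.Theory.

(* The group S = (Z/4)^3 x| D8 is realised faithfully as a group of affine
   permutations of the 64-element set (Z/4)^3 = 'Z_4 * 'Z_4 * 'Z_4
   (coordinates w.r.t. the basis v1, v2, v3):
   - v_i acts as translation by the i-th basis vector;
   - s acts by the linear map M_s with M_s e1 = e2, M_s e2 = e3,
     M_s e3 = e1 - e2 + e3   (i.e. v_i^s = s v_i s^-1 as in the paper);
   - t acts by the linear map M_t with M_t e1 = -e3, M_t e2 = -e2, M_t e3 = -e1.
   Since the D8-action on (Z/4)^3 is faithful, the group generated is
   isomorphic to the semidirect product S of the paper (order 2^9). *)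

Definition pt : finType := ('Z_4 * 'Z_4 * 'Z_4)%type.

Local Open Scope ring_scope.

Definition fv1 (x : pt) : pt := let: (a, b, c) := x in (a + 1, b, c).
Definition fv2 (x : pt) : pt := let: (a, b, c) := x in (a, b + 1, c).
Definition fv3 (x : pt) : pt := let: (a, b, c) := x in (a, b, c + 1).
Definition gv1 (x : pt) : pt := let: (a, b, c) := x in (a - 1, b, c).
Definition gv2 (x : pt) : pt := let: (a, b, c) := x in (a, b - 1, c).
Definition gv3 (x : pt) : pt := let: (a, b, c) := x in (a, b, c - 1).
(* a e1 + b e2 + c e3  |->  a e2 + b e3 + c (e1 - e2 + e3) *)
Definition fs (x : pt) : pt := let: (a, b, c) := x in (c, a - c, b + c).
Definition gs (x : pt) : pt := let: (a, b, c) := x in (b + a, c - a, a).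
(* a e1 + b e2 + c e3  |->  - a e3 - b e2 - c e1 *)
Definition ft (x : pt) : pt := let: (a, b, c) := x in (- c, - b, - a).

Lemma fv1K : cancel fv1 gv1.
Proof. by case=> [[a b] c] /=; rewrite addrK. Qed.
Lemma fv2K : cancel fv2 gv2.
Proof. by case=> [[a b] c] /=; rewrite addrK. Qed.
Lemma fv3K : cancel fv3 gv3.
Proof. by case=> [[a b] c] /=; rewrite addrK. Qed.
Lemma fsK : cancel fs gs.
Proof.
by case=> [[a b] c] /=; rewrite subrK addrK.
Qed.
Lemma ftK : cancel ft ft.
Proof. by case=> [[a b] c] /=; rewrite !opprK. Qed.

Definition v1 : {perm pt} := perm (can_inj fv1K).
Definition v2 : {perm pt} := perm (can_inj fv2K).
Definition v3 : {perm pt} := perm (can_inj fv3K).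
Definition s : {perm pt} := perm (can_inj fsK).
Definition t : {perm pt} := perm (can_inj ftK).

Local Close Scope ring_scope.

Definition S : {group {perm pt}} := <<[set v1; v2; v3; s; t]>>%G.

Definition elab2 (n : nat) : {group 'rV['Z_2]_n} := [set: 'rV['Z_2]_n]%G.

Definition E4subs : {set {group {perm pt}}} :=
  [set H : {group {perm pt}} | (H \subset S) && (H \isog elab2 4)].

Definition E4classes : {set {set {group {perm pt}}}} :=
  [set orbit 'JG S H | H in E4subs].

(* Main.v *)
Require Import Defs.
From mathcomp Require Import all_boot all_order all_algebra all_fingroup all_solvable.
From mathcomp Require Import mxabelem.
Set Implicit Arguments. Unset Strict Implicit. Unset Printing Implicit Defensive.
Import GRing.Theory.

Local Open Scope ring_scope.
Definition z4 : seq 'Z_4 := [:: 0; 1; 2; 3].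
Lemma mem_z4 (a : 'Z_4) : a \in z4.
Proof. by case: a => [[|[|[|[|n]]]] Hn]. Qed.
Definition pts : seq pt :=
  [seq (ab, c) | ab <- [seq (a, b) | a <- z4, b <- z4], c <- z4].
Lemma mem_pts (x : pt) : x \in pts.
Proof.
case: x => [[a b] c]; apply: allpairs_f; last exact: mem_z4.
by apply: allpairs_f; apply: mem_z4.
Qed.
Lemma ptsE (f g : pt -> pt) : all (fun x => f x == g x) pts -> f =1 g.
Proof. by move=> /allP H x; apply/eqP; apply: H; apply: mem_pts. Qed.

Definition addp (x y : pt) : pt :=
  let: (a, b, c) := x in let: (a', b', c') := y in (a + a', b + b', c + c').
Definition p0 : pt := (0, 0, 0).
Lemma addp0 x : addp x p0 = x.
Proof. by case: x => [[a b] c]; rewrite /= !addr0. Qed.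
Lemma add0p x : addp p0 x = x.
Proof. by case: x => [[a b] c]; rewrite /= !add0r. Qed.
Lemma addpA x y z : addp x (addp y z) = addp (addp x y) z.
Proof. by case: x => [[a b] c]; case: y => [[a' b'] c']; case: z => [[? ?] ?]; rewrite /= !addrA. Qed.
Definition negpZ (x : pt) : pt := let: (a, b, c) := x in (- a, - b, - c).
Lemma addpVZ x : addp x (negpZ x) = p0.
Proof. by case: x => [[a b] c]; rewrite /= !subrr. Qed.
Lemma addpI w : injective (addp^~ w).
Proof.
move=> x y /= E.
have : addp (addp x w) (negpZ w) = addp (addp y w) (negpZ w) by rewrite E.
by rewrite -!addpA addpVZ !addp0.
Qed.
Local Close Scope ring_scope.

Definition gfun (b : bool) : pt -> pt := if b then fs else ft.
Definition gperm (b : bool) : {perm pt} := if b then s else t.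
Fixpoint wfun (l : seq bool) (x : pt) : pt :=
  if l is b :: l' then wfun l' (gfun b x) else x.
Fixpoint wperm (l : seq bool) : {perm pt} :=
  if l is b :: l' then gperm b * wperm l' else 1.
Lemma wpermE l x : wperm l x = wfun l x.
Proof.
elim: l x => [|b l IH] x /=; first by rewrite perm1.
by rewrite permM IH; case: b; rewrite /= permE.
Qed.
Lemma gens_in (g : {perm pt}) : g \in [set v1; v2; v3; s; t] -> g \in S.
Proof. by move=> H; apply: mem_gen. Qed.
Lemma wperm_in l : wperm l \in S.
Proof.
elim: l => [|b l IH] /=; first exact: group1.
rewrite groupM //; apply: gens_in; case: b; rewrite !inE eqxx ?orbT //.
Qed.

Definition words : seq (seq bool) :=
  [:: [::]; [:: true]; [:: true; true]; [:: true; true; true];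
      [:: false]; [:: true; false]; [:: true; true; false]; [:: true; true; true; false]].
Definition lfun (k : nat) : pt -> pt := wfun (nth [::] words k).
Definition lperm (k : nat) : {perm pt} := wperm (nth [::] words k).

Definition multab : seq (seq nat) :=
 [:: [:: 0; 1; 2; 3; 4; 5; 6; 7]; [:: 1; 2; 3; 0; 5; 6; 7; 4]; [:: 2; 3; 0; 1; 6; 7; 4; 5];
     [:: 3; 0; 1; 2; 7; 4; 5; 6]; [:: 4; 7; 6; 5; 0; 3; 2; 1]; [:: 5; 4; 7; 6; 1; 0; 3; 2];
     [:: 6; 5; 4; 7; 2; 1; 0; 3]; [:: 7; 6; 5; 4; 3; 2; 1; 0]].
Definition mulk (k l : nat) : nat := nth 0 (nth [::] multab k) l.
Definition invk (k : nat) := nth 0 [:: 0; 3; 2; 1; 4; 5; 6; 7] k.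
Definition k8 := iota 0 8.
Lemma in_k8 k : k < 8 -> k \in k8.
Proof. by rewrite mem_iota. Qed.
Lemma k8P (P : pred nat) : all P k8 -> forall k, k < 8 -> P k.
Proof. by move=> /allP H k lk; apply: H; rewrite mem_iota. Qed.

Definition check_lin :=
  all (fun k => all (fun x => all (fun y => lfun k (addp x y) == addp (lfun k x) (lfun k y)) pts) pts) k8.
Definition check_mulk :=
  all (fun k => (invk k < 8) && (mulk k (invk k) == 0) && all (fun l => (mulk k l < 8) &&
    all (fun x => lfun (mulk k l) x == lfun l (lfun k x)) pts) k8) k8.
Definition check_misc :=
  all (fun k => (lfun k p0 == p0) &&
    all (fun l => (k == l) || ~~ all (fun x => lfun k x == lfun l x) pts) k8) k8.
Lemma check_lin_ok : check_lin. Proof. by vm_compute. Qed.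
Lemma check_mulk_ok : check_mulk. Proof. by vm_compute. Qed.
Lemma check_misc_ok : check_misc. Proof. by vm_compute. Qed.

Lemma lfun_lin k x y : k < 8 -> lfun k (addp x y) = addp (lfun k x) (lfun k y).
Proof.
move=> lk; have /allP H := k8P check_lin_ok lk.
by apply/eqP; move/allP: (H x (mem_pts x)) => /(_ y (mem_pts y)).
Qed.
Lemma mulk_lt k l : k < 8 -> l < 8 -> mulk k l < 8.
Proof.
move=> lk ll; have /andP[_ /allP H] := k8P check_mulk_ok lk.
by case/andP: (H l (in_k8 ll)).
Qed.
Lemma lfunM k l x : k < 8 -> l < 8 -> lfun (mulk k l) x = lfun l (lfun k x).
Proof.
move=> lk ll; have /andP[_ /allP H] := k8P check_mulk_ok lk.
case/andP: (H l (in_k8 ll)) => _ /allP H2.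
by apply/eqP; apply: H2; apply: mem_pts.
Qed.
Lemma invk_lt k : k < 8 -> invk k < 8.
Proof. by move=> lk; have /andP[/andP[-> _] _] := k8P check_mulk_ok lk. Qed.
Lemma mulkV k : k < 8 -> mulk k (invk k) = 0.
Proof. by move=> lk; have /andP[/andP[_ /eqP ->] _] := k8P check_mulk_ok lk. Qed.
Lemma lfun_p0 k : k < 8 -> lfun k p0 = p0.
Proof. by move=> lk; have /andP[/eqP -> _] := k8P check_misc_ok lk. Qed.
Lemma lfun_inj k l : k < 8 -> l < 8 -> lfun k =1 lfun l -> k = l.
Proof.
move=> lk ll E; have /andP[_ /allP H] := k8P check_misc_ok lk.
case/orP: (H l (in_k8 ll)) => [/eqP //|/negP[]].
by apply/allP => x _; rewrite E.
Qed.

Local Open Scope ring_scope.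
Lemma v1X (n : nat) x : (v1 ^+ n)%g x = addp x (n%:R, 0, 0).
Proof.
elim: n x => [|n IH] x; first by rewrite expg0 perm1 mulr0n addp0.
rewrite expgSr permM IH permE; case: x => [[a b] c] /=.
by rewrite -addrA natr1.
Qed.
Lemma v2X (n : nat) x : (v2 ^+ n)%g x = addp x (0, n%:R, 0).
Proof.
elim: n x => [|n IH] x; first by rewrite expg0 perm1 mulr0n addp0.
rewrite expgSr permM IH permE; case: x => [[a b] c] /=.
by rewrite -addrA natr1.
Qed.
Lemma v3X (n : nat) x : (v3 ^+ n)%g x = addp x (0, 0, n%:R).
Proof.
elim: n x => [|n IH] x; first by rewrite expg0 perm1 mulr0n addp0.
rewrite expgSr permM IH permE; case: x => [[a b] c] /=.
by rewrite -addrA natr1.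
Qed.
Local Close Scope ring_scope.
Definition tr (b : pt) : {perm pt} := let: (x, y, z) := b in v1 ^+ x * v2 ^+ y * v3 ^+ z.
Lemma trE b x : tr b x = addp x b.
Proof.
case: b => [[a b] c]; rewrite /tr !permM v1X v2X v3X !natr_Zp.
by case: x => [[x y] z]; rewrite /= ?addr0 ?add0r.
Qed.
Lemma tr_in b : tr b \in S.
Proof.
case: b => [[a b] c]; rewrite /tr !groupM // groupX //; apply: gens_in; rewrite !inE eqxx ?orbT //.
Qed.
Definition paff (c : nat * pt) : {perm pt} := lperm c.1 * tr c.2.
Lemma paffE c x : paff c x = addp (lfun c.1 x) c.2.
Proof. by rewrite permM trE wpermE. Qed.
Lemma paff_in c : paff c \in S.
Proof. by rewrite groupM ?tr_in ?wperm_in. Qed.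


Definition ptN := (nat * nat * nat)%type.
Fixpoint m4 (n : nat) : nat :=
  match n with 0 => 0 | 1 => 1 | 2 => 2 | 3 => 3 | n'.+4 => m4 n' end.
Definition n4 := iota 0 4.
Definition ptsN : seq ptN :=
  [seq (ab, c) | ab <- [seq (a, b) | a <- n4, b <- n4], c <- n4].
Definition addpN (x y : ptN) : ptN :=
  let: (a, b, c) := x in let: (a', b', c') := y in (m4 (a + a'), m4 (b + b'), m4 (c + c')).
Definition negN a := m4 (4 - a).
Definition negpN (x : ptN) : ptN := let: (a, b, c) := x in (negN a, negN b, negN c).
Definition fsN (x : ptN) : ptN := let: (a, b, c) := x in (c, m4 (a + negN c), m4 (b + c)).
Definition ftN (x : ptN) : ptN := let: (a, b, c) := x in (negN c, negN b, negN a).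
Definition gfunN (b : bool) := if b then fsN else ftN.
Fixpoint wfunN (l : seq bool) (x : ptN) : ptN :=
  if l is b :: l' then wfunN l' (gfunN b x) else x.
Definition lfunN k := wfunN (nth [::] words k).
Definition Z (x : ptN) : pt :=
  let: (a, b, c) := x in ((inZp a : 'Z_4), (inZp b : 'Z_4), (inZp c : 'Z_4)).

Definition check_Z :=
  all (fun x => [&& fs (Z x) == Z (fsN x), ft (Z x) == Z (ftN x), fsN x \in ptsN, ftN x \in ptsN &
     all (fun y => [&& addp (Z x) (Z y) == Z (addpN x y), addpN x y \in ptsN &
                      (Z x == Z y) ==> (x == y)]) ptsN]) ptsN
  && all (fun p => p \in map Z ptsN) pts.
Lemma check_Z_ok : check_Z. Proof. by vm_compute. Qed.

Lemma checkZx x : x \in ptsN -> [&& fs (Z x) == Z (fsN x), ft (Z x) == Z (ftN x), fsN x \in ptsN, ftN x \in ptsN &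
     all (fun y => [&& addp (Z x) (Z y) == Z (addpN x y), addpN x y \in ptsN &
                      (Z x == Z y) ==> (x == y)]) ptsN].
Proof. by move: check_Z_ok => /andP[/allP H _]; apply: H. Qed.

Lemma wfunZ l x : x \in ptsN -> wfun l (Z x) = Z (wfunN l x) /\ wfunN l x \in ptsN.
Proof.
elim: l x => [|b l IH] x xN //=.
have /and5P[/eqP e1 /eqP e2 i1 i2 _] := checkZx xN.
by case: b => /=; [rewrite e1; apply: IH | rewrite e2; apply: IH].
Qed.
Lemma lfunZ k x : x \in ptsN -> lfun k (Z x) = Z (lfunN k x).
Proof. by move=> xN; case: (wfunZ (nth [::] words k) xN). Qed.
Lemma lfunN_in k x : x \in ptsN -> lfunN k x \in ptsN.
Proof. by move=> xN; case: (wfunZ (nth [::] words k) xN). Qed.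
Lemma addpZ x y : x \in ptsN -> y \in ptsN -> addp (Z x) (Z y) = Z (addpN x y).
Proof.
move=> xN yN; have /and5P[_ _ _ _ /allP H] := checkZx xN.
by case/and3P: (H y yN) => /eqP.
Qed.
Lemma addpN_in x y : x \in ptsN -> y \in ptsN -> addpN x y \in ptsN.
Proof.
move=> xN yN; have /and5P[_ _ _ _ /allP H] := checkZx xN.
by case/and3P: (H y yN).
Qed.
Lemma Z_inj x y : x \in ptsN -> y \in ptsN -> Z x = Z y -> x = y.
Proof.
move=> xN yN E; have /and5P[_ _ _ _ /allP H] := checkZx xN.
by case/and3P: (H y yN) => _ _; rewrite E eqxx => /eqP.
Qed.
Lemma Z_surj p : exists2 x, x \in ptsN & p = Z x.
Proof.
move: check_Z_ok => /andP[_ /allP H].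
by have /mapP[x xN ->] := H p (mem_pts p); exists x.
Qed.

Definition codeN := (nat * ptN)%type.
Definition codesN : seq codeN := [seq (k, b) | k <- k8, b <- ptsN].
Lemma mem_codesN (c : codeN) : (c \in codesN) = (c.1 < 8) && (c.2 \in ptsN).
Proof.
case: c => k b /=; apply/idP/andP.
  by case/allpairsP => [[k' b'] [/= Hk Hb [-> ->]]]; split=> //; move: Hk; rewrite mem_iota.
by case=> Hk Hb; apply: allpairs_f => //; rewrite mem_iota.
Qed.
Definition mulcN (c d : codeN) : codeN := (mulk c.1 d.1, addpN (lfunN d.1 c.2) d.2).
Definition ecN : codeN := (0, (0, 0, 0)).
Definition invcN (c : codeN) : codeN := (invk c.1, negpN (lfunN (invk c.1) c.2)).
Definition paffN (c : codeN) : {perm pt} := paff (c.1, Z c.2).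
Definition JN := [seq c <- codesN | mulcN c c == ecN].
Definition commN (c d : codeN) := mulcN c d == mulcN d c.
Definition P1 x := [seq c <- JN | commN x c].
Definition Q1 (x : codeN) := [seq c <- P1 x | (c.1 == 0) || (c.1 == x.1)].
Definition P2 x y := [seq c <- P1 x | commN y c].
Definition Elist : seq (seq codeN) := [::
  [:: (0, (0, 0, 0)); (0, (0, 2, 2)); (0, (2, 0, 2)); (0, (2, 2, 0)); (2, (0, 0, 0)); (2, (0, 2, 2)); (2, (2, 0, 2)); (2, (2, 2, 0)); (5, (0, 0, 0)); (5, (0, 2, 2)); (5, (2, 0, 2)); (5, (2, 2, 0)); (7, (0, 0, 0)); (7, (0, 2, 2)); (7, (2, 0, 2)); (7, (2, 2, 0))];
  [:: (0, (0, 0, 0)); (0, (0, 2, 2)); (0, (2, 0, 2)); (0, (2, 2, 0)); (2, (0, 0, 0)); (2, (0, 2, 2)); (2, (2, 0, 2)); (2, (2, 2, 0)); (5, (1, 0, 1)); (5, (1, 2, 3)); (5, (3, 0, 3)); (5, (3, 2, 1)); (7, (1, 0, 1)); (7, (1, 2, 3)); (7, (3, 0, 3)); (7, (3, 2, 1))];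
  [:: (0, (0, 0, 0)); (0, (0, 2, 2)); (0, (2, 0, 2)); (0, (2, 2, 0)); (2, (0, 1, 3)); (2, (0, 3, 1)); (2, (2, 1, 1)); (2, (2, 3, 3)); (5, (0, 1, 3)); (5, (0, 3, 1)); (5, (2, 1, 1)); (5, (2, 3, 3)); (7, (0, 0, 0)); (7, (0, 2, 2)); (7, (2, 0, 2)); (7, (2, 2, 0))];
  [:: (0, (0, 0, 0)); (0, (0, 2, 2)); (0, (2, 0, 2)); (0, (2, 2, 0)); (2, (0, 1, 3)); (2, (0, 3, 1)); (2, (2, 1, 1)); (2, (2, 3, 3)); (5, (1, 1, 0)); (5, (1, 3, 2)); (5, (3, 1, 2)); (5, (3, 3, 0)); (7, (1, 0, 1)); (7, (1, 2, 3)); (7, (3, 0, 3)); (7, (3, 2, 1))];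
  [:: (0, (0, 0, 0)); (0, (0, 2, 2)); (0, (2, 0, 2)); (0, (2, 2, 0)); (2, (1, 0, 3)); (2, (1, 2, 1)); (2, (3, 0, 1)); (2, (3, 2, 3)); (5, (0, 1, 3)); (5, (0, 3, 1)); (5, (2, 1, 1)); (5, (2, 3, 3)); (7, (1, 1, 2)); (7, (1, 3, 0)); (7, (3, 1, 0)); (7, (3, 3, 2))];
  [:: (0, (0, 0, 0)); (0, (0, 2, 2)); (0, (2, 0, 2)); (0, (2, 2, 0)); (2, (1, 0, 3)); (2, (1, 2, 1)); (2, (3, 0, 1)); (2, (3, 2, 3)); (5, (1, 1, 0)); (5, (1, 3, 2)); (5, (3, 1, 2)); (5, (3, 3, 0)); (7, (0, 1, 1)); (7, (0, 3, 3)); (7, (2, 1, 3)); (7, (2, 3, 1))];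
  [:: (0, (0, 0, 0)); (0, (0, 2, 2)); (0, (2, 0, 2)); (0, (2, 2, 0)); (2, (1, 1, 2)); (2, (1, 3, 0)); (2, (3, 1, 0)); (2, (3, 3, 2)); (5, (0, 0, 0)); (5, (0, 2, 2)); (5, (2, 0, 2)); (5, (2, 2, 0)); (7, (1, 1, 2)); (7, (1, 3, 0)); (7, (3, 1, 0)); (7, (3, 3, 2))];
  [:: (0, (0, 0, 0)); (0, (0, 2, 2)); (0, (2, 0, 2)); (0, (2, 2, 0)); (2, (1, 1, 2)); (2, (1, 3, 0)); (2, (3, 1, 0)); (2, (3, 3, 2)); (5, (1, 0, 1)); (5, (1, 2, 3)); (5, (3, 0, 3)); (5, (3, 2, 1)); (7, (0, 1, 1)); (7, (0, 3, 3)); (7, (2, 1, 3)); (7, (2, 3, 1))]].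
Definition check_search :=
  (count (fun c => c.1 == 0) JN < 16) &&
  all (fun x => (x.1 == 0) || ((size (Q1 x) < 16) &&
    all (fun y => (y \in Q1 x) || (size (P2 x y) < 16) || (P2 x y \in Elist)) (P1 x))) JN.
Definition check_E :=
  (size Elist == 8) && uniq Elist && uniq JN &&
  all (fun L => [&& size L == 16, uniq L, ecN \in L, all (mem JN) L &
     all (fun c => all (fun d => (mulcN c d \in L) && commN c d) L) L]) Elist.
Definition check_inv := all (fun c => (invcN c \in codesN) && (mulcN c (invcN c) == ecN)) codesN.
Definition conjcN (d c : codeN) : codeN := mulcN (invcN c) (mulcN d c).
Definition eqcode (c d : codeN) : bool :=
  let: (k, (a, b, e)) := c in let: (k', (a', b', e')) := d in
  [&& eqn k k', eqn a a', eqn b b' & eqn e e'].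
Lemma eqcodeE c d : eqcode c d = (c == d).
Proof.
case: c => k [[a b] e]; case: d => k' [[a' b'] e'].
by rewrite /eqcode !eqnE !xpair_eqE !andbA.
Qed.
Definition memc (c : codeN) (L : seq codeN) := has (eqcode c) L.
Lemma memcE c L : memc c L = (c \in L).
Proof.
rewrite /memc -has_pred1; apply: eq_has => d /=; by rewrite eqcodeE eq_sym.
Qed.
Definition cj (i : nat) (c : codeN) : nat :=
  let M := map (conjcN^~ c) (nth [::] Elist i) in
  find (fun L => all (fun m => memc m L) M) Elist.
Definition check_cj :=
  all (fun i => all (fun c => let j := cj i c in (j < 8) &&
     (let L := nth [::] Elist j in all (fun d => memc (conjcN d c) L) (nth [::] Elist i))) codesN) k8.
Definition cls (i : nat) := [seq j <- k8 | j \in map (cj i) codesN].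
Definition clsc (i : nat) := let l := map (cj i) codesN in [seq j <- k8 | has (eqn j) l].
Lemma clscE i : clsc i = cls i.
Proof.
rewrite /clsc /cls; apply: eq_filter => j; rewrite -has_pred1; apply: eq_has => x /=.
by rewrite eqnE eq_sym.
Qed.
Definition check_cls :=
  [seq clsc i | i <- k8] == [:: [:: 0; 5]; [:: 1; 4]; [:: 2; 3; 6; 7]; [:: 2; 3; 6; 7];
                             [:: 1; 4]; [:: 0; 5]; [:: 2; 3; 6; 7]; [:: 2; 3; 6; 7]].
Definition check_dist :=
  all (fun n => all (fun m => (n == m) || ~~ all (mem (nth [::] Elist m)) (nth [::] Elist n)) k8) k8.
Lemma check_search_ok : check_search. Proof. by vm_compute. Qed.
Lemma check_E_ok : check_E. Proof. by vm_compute. Qed.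
Lemma check_inv_ok : check_inv. Proof. by vm_compute. Qed.
Lemma check_cj_ok : check_cj. Proof. by vm_compute. Qed.
Lemma check_cls_ok : check_cls. Proof. by vm_compute. Qed.
Lemma check_dist_ok : check_dist. Proof. by vm_compute. Qed.

Section PartC.

Local Open Scope group_scope.
Lemma check_invc c : c \in codesN -> (invcN c \in codesN) && (mulcN c (invcN c) == ecN).
Proof. by move: check_inv_ok => /allP; apply. Qed.

Lemma mulcN_in c d : c \in codesN -> d \in codesN -> mulcN c d \in codesN.
Proof.
rewrite !mem_codesN => /andP[ck cb] /andP[dk db].
by rewrite /= mulk_lt //= addpN_in // lfunN_in.
Qed.
Lemma paffN_M c d : c \in codesN -> d \in codesN -> paffN c * paffN d = paffN (mulcN c d).
Proof.
case: c => k b; case: d => l b'; rewrite !mem_codesN /= => /andP[lk bN] /andP[ll bN'].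
apply/permP => x; rewrite permM !paffE /=.
rewrite lfun_lin // lfunM // -(addpZ (lfunN_in l bN) bN') -(lfunZ l bN).
by rewrite addpA.
Qed.
Lemma paffN1 : paffN ecN = 1.
Proof.
apply/permP => x; rewrite paffE perm1.
have -> : Z ecN.2 = p0 by apply/eqP; vm_compute.
by rewrite addp0.
Qed.
Lemma paffNE k b x : paffN (k, b) x = addp (lfun k x) (Z b).
Proof. exact: paffE. Qed.
Lemma paffN_inj c d : c \in codesN -> d \in codesN -> paffN c = paffN d -> c = d.
Proof.
case: c => k b; case: d => l b'; rewrite !mem_codesN => /andP[/= lk bN] /andP[/= ll bN'].
move=> E0.
have E : forall x, paffN (k, b) x = paffN (l, b') x by move=> x; rewrite E0.
have Eb : b = b'.
  have := E p0; rewrite !paffNE (lfun_p0 lk) (lfun_p0 ll) !add0p; exact: Z_inj.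
subst b'.
have Hl : lfun k =1 lfun l.
  by move=> x; apply: (@addpI (Z b)); have := E x; rewrite !paffNE.
by rewrite (lfun_inj lk ll Hl).
Qed.

End PartC.

Section Part0.
Local Open Scope group_scope.
Lemma ecN_in : ecN \in codesN.
Proof. by vm_compute. Qed.
Lemma paffN_V c : c \in codesN -> (paffN c)^-1 = paffN (invcN c).
Proof.
move=> cI; case/andP: (check_invc cI) => iI /eqP e.
have : paffN c * paffN (invcN c) = 1 by rewrite paffN_M // e paffN1.
by move/eqP; rewrite mulg_eq1 => /eqP ->; rewrite invgK.
Qed.
Definition SaffN : {set {perm pt}} := [set x in map paffN codesN].
Lemma SaffNP x : reflect (exists2 c, c \in codesN & x = paffN c) (x \in SaffN).
Proof. by rewrite /SaffN in_set; apply: (iffP mapP) => -[c cI ->]; exists c. Qed.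
Lemma SaffN_group : group_set SaffN.
Proof.
apply/group_setP; split.
  by apply/SaffNP; exists ecN; rewrite ?paffN1 //; apply: ecN_in.
move=> x y /SaffNP[c cI ->] /SaffNP[d dI ->].
by apply/SaffNP; exists (mulcN c d); [apply: mulcN_in | rewrite paffN_M].
Qed.
Lemma perm_eq_check (p : {perm pt}) (h : pt -> pt) (c : codeN) :
  (forall x, p x = h x) -> all (fun x => h x == addp (lfun c.1 x) (Z c.2)) pts -> p = paffN c.
Proof. by move=> pE hE; apply/permP => x; rewrite pE paffE; exact: (ptsE hE). Qed.
Lemma gen_in_SaffN g : g \in [set v1; v2; v3; s; t] -> g \in SaffN.
Proof.
move=> Hg; apply/SaffNP; move: Hg; rewrite !inE => /orP[/orP[/orP[/orP[]|]|]|] /eqP ->.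
- exists (0, (1, 0, 0))%N; first by vm_compute.
  by apply: (@perm_eq_check _ fv1) => [x|]; [rewrite permE | vm_compute].
- exists (0, (0, 1, 0))%N; first by vm_compute.
  by apply: (@perm_eq_check _ fv2) => [x|]; [rewrite permE | vm_compute].
- exists (0, (0, 0, 1))%N; first by vm_compute.
  by apply: (@perm_eq_check _ fv3) => [x|]; [rewrite permE | vm_compute].
- exists (1, (0, 0, 0))%N; first by vm_compute.
  by apply: (@perm_eq_check _ fs) => [x|]; [rewrite permE | vm_compute].
- exists (4, (0, 0, 0))%N; first by vm_compute.
  by apply: (@perm_eq_check _ ft) => [x|]; [rewrite permE | vm_compute].
Qed.
Lemma S_sub : S \subset SaffN.
Proof.
rewrite /S /= -(gen_set_id SaffN_group); apply: genS.
by apply/subsetP => g; apply: gen_in_SaffN.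
Qed.
Lemma S_codes x : x \in S -> exists2 c, c \in codesN & x = paffN c.
Proof. by move=> /(subsetP S_sub) /SaffNP. Qed.
Lemma paffN_in c : paffN c \in S.
Proof. exact: paff_in. Qed.

End Part0.

Section Part1.

Lemma check_E_parts :
  [/\ size Elist = 8, uniq Elist, uniq JN &
   forall L, L \in Elist -> [/\ size L = 16, uniq L, ecN \in L, {subset L <= JN} &
     forall c d, c \in L -> d \in L -> (mulcN c d \in L) && commN c d]].
Proof.
move: check_E_ok => /andP[/andP[/andP[/eqP e1 e2] e3] /allP e4]; split; [exact: e1|exact: e2|exact: e3|move=> L LE].
case/and5P: (e4 L LE) => /eqP e5 e6 e7 /allP sJ /allP cl; split; [exact: e5|exact: e6|exact: e7|exact: sJ|].
move=> c d cL dL; by move/allP: (cl c cL) => /(_ d dL).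
Qed.

Opaque JN codesN commN mulcN ptsN Elist.
Lemma search (p : pred codeN) :
  (forall c d, c \in JN -> d \in JN -> p c -> p d -> commN c d) ->
  16 <= count p JN -> exists2 L, L \in Elist & filter p JN = L.
Proof.
move=> Hc Hcnt.
move: check_search_ok => /andP[cN /allP cE].
have [x xJ /andP[px x0]] : exists2 x, x \in JN & p x && (x.1 != 0).
  apply/hasP; apply: contraLR Hcnt => /hasPn H; rewrite -ltnNge.
  apply: leq_ltn_trans cN.
  have -> : count p JN = count (predI p (fun c => c.1 == 0)) JN.
    apply: eq_in_count => c cJ /=; case pc: (p c) => //=.
    by have := H c cJ; rewrite /= pc /= negbK.
  by apply: sub_count => c /andP[].
case/orP: (cE x xJ) => [x00 | /andP[sQ /allP cY]]; first by rewrite x00 in x0.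
have e1 : count p JN = count p (P1 x).
  rewrite /P1 [RHS]count_filter; apply: eq_in_count => c cJ /=.
  by case pc: (p c) => //=; rewrite (Hc x c xJ cJ px pc).
have [y yP /andP[py yQ]] : exists2 y, y \in P1 x & p y && (y \notin Q1 x).
  apply/hasP; apply: contraLR Hcnt => /hasPn H; rewrite -ltnNge e1.
  apply: leq_ltn_trans sQ; apply: (leq_trans _ (count_size p (Q1 x))).
  rewrite /Q1 [X in _ <= X]count_filter leq_eqVlt; apply/orP; left; apply/eqP.
  apply: eq_in_count => c cP /=; case pc: (p c) => //=.
  have := H c cP; rewrite /= pc /= negbK /Q1 mem_filter cP andbT => ->.
  by [].
have yJ : y \in JN by move: yP; rewrite mem_filter => /andP[].
have e2 : count p (P1 x) = count p (P2 x y).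
  rewrite /P2 [RHS]count_filter; apply: eq_in_count => c cP /=.
  have cJ : c \in JN by move: cP; rewrite mem_filter => /andP[].
  by case pc: (p c) => //=; rewrite (Hc y c yJ cJ py pc).
have LE : P2 x y \in Elist.
  move: (cY y yP); rewrite (negbTE yQ) /= => /orP[small|LE']; last exact: LE'.
  have big : 16 <= size (P2 x y) by apply: (leq_trans Hcnt); rewrite e1 e2; apply: count_size.
  by move: (leq_trans big small); rewrite ltnn.
exists (P2 x y); first exact: LE.
have [_ _ _ Hs] := check_E_parts; have [sz _ _ _ _] := Hs _ LE.
have allp : all p (P2 x y).
  rewrite all_count eqn_leq count_size sz -e2 -e1 Hcnt.
  by [].
rewrite /P2 /P1 -filter_predI; apply: eq_in_filter => c cJ /=.
case pc: (p c).
  by rewrite (Hc y c yJ cJ py pc) (Hc x c xJ cJ px pc).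
apply/esym/negbTE; apply/negP => /andP[cy cx].
have : c \in P2 x y by rewrite /P2 /P1 mem_filter cy mem_filter cx cJ.
by move/(allP allp); rewrite pc.
Qed.


End Part1.

Section Part2.
Opaque JN codesN commN mulcN ptsN Elist.
Local Open Scope group_scope.

Lemma elab2_abelem n : 2.-abelem (elab2 n).
Proof. exact: (@mx_Fp_abelem 2 1 n isT). Qed.
Lemma card_elab2 n : #|elab2 n| = (2 ^ n)%N.
Proof. by rewrite /elab2 /= cardsT card_mx card_ord mul1n. Qed.
Lemma isog_elab (H : {group {perm pt}}) n :
  (H \isog elab2 n) = 2.-abelem H && (#|H| == 2 ^ n)%N.
Proof. by rewrite isog_sym (isog_abelem_card H (elab2_abelem n)) card_elab2. Qed.

Definition HsetN (L : seq codeN) : {set {perm pt}} := [set x in map paffN L].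
Lemma HsetNP L x : reflect (exists2 c, c \in L & x = paffN c) (x \in HsetN L).
Proof. by rewrite /HsetN in_set; apply: (iffP mapP) => -[c cI ->]; exists c. Qed.
Transparent JN.
Lemma JN_codes c : c \in JN -> c \in codesN.
Proof. by rewrite /JN mem_filter => /andP[]. Qed.
Lemma JN_sq c : c \in JN -> mulcN c c = ecN.
Proof. by rewrite /JN mem_filter => /andP[/eqP]. Qed.
Lemma mem_JN c : c \in codesN -> (c \in JN) = (mulcN c c == ecN).
Proof. by move=> cI; rewrite /JN mem_filter cI andbT. Qed.
Opaque JN.
Lemma card_HsetN L : uniq L -> {subset L <= codesN} -> #|HsetN L| = size L.
Proof.
move=> uL sL; rewrite /HsetN cardsE (card_uniqP _) ?size_map //.
rewrite map_inj_in_uniq; first exact: uL.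
by move=> c d cL dL; apply: paffN_inj; apply: sL.
Qed.

Lemma classify (H : {group {perm pt}}) :
  H \subset S -> 2.-abelem H -> 16 <= #|H| ->
  exists2 L, L \in Elist & (H :=: HsetN L) /\ #|H| = 16.
Proof.
move=> sHS /(abelemP (isT : prime 2)) [cHH Hx2] Hcard.
have [_ _ uJ Hs] := check_E_parts.
have HJ : forall x, x \in H -> exists2 c, c \in JN & x = paffN c.
  move=> x Hx; have [c cI xE] := S_codes (subsetP sHS x Hx).
  exists c; last exact: xE.
  rewrite (mem_JN cI).
  have := Hx2 x Hx; rewrite xE expgS expg1 paffN_M // -paffN1 => E.
  apply/eqP; apply: paffN_inj E; [exact: mulcN_in | exact: ecN_in].
pose p := [pred c | paffN c \in H].
have Hdef : H :=: [set x in map paffN (filter p JN)].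
  apply/setP => x; rewrite in_set; apply/idP/mapP.
    move=> Hx; have [c cJ xE] := HJ x Hx; exists c; last exact: xE.
    by rewrite mem_filter cJ andbT /= -xE.
  by case=> c; rewrite mem_filter => /andP[pc _] ->.
have Hc2 : #|H| = count p JN.
  rewrite Hdef cardsE (card_uniqP _) ?size_map ?size_filter //.
  rewrite map_inj_in_uniq; first exact: (filter_uniq _ uJ).
  move=> c d; rewrite !mem_filter => /andP[_ /andP[_ cI]] /andP[_ /andP[_ dI]] E.
  exact: (paffN_inj cI dI E).
have comm : forall c d, c \in JN -> d \in JN -> p c -> p d -> commN c d.
  move=> c d cJ dJ pc pd; apply/eqP; apply: paffN_inj.
  - by apply: mulcN_in; apply: JN_codes.
  - by apply: mulcN_in; apply: JN_codes.
  rewrite -!paffN_M; try by apply: JN_codes.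
  exact: (centsP cHH) _ pc _ pd.
have Hcnt : 16 <= count p JN by rewrite -Hc2.
have [L LE fL] := search comm Hcnt.
exists L; first exact: LE.
split; first by rewrite Hdef fL.
have [sz _ _ _ _] := Hs L LE.
by rewrite Hc2 -size_filter fL sz.
Qed.

End Part2.

Section Part3.
Opaque JN codesN commN mulcN ptsN Elist cls cj.
Local Open Scope group_scope.

Definition Ln (n : nat) := nth [::] Elist n.
Definition Hn (n : nat) : {group {perm pt}} := <<HsetN (Ln n)>>%G.
Lemma Ln_in n : n < 8 -> Ln n \in Elist.
Proof. by have [sz _ _ _] := check_E_parts; move=> ln; apply: mem_nth; rewrite sz. Qed.
Lemma Ln_props n : n < 8 -> [/\ size (Ln n) = 16, uniq (Ln n), ecN \in Ln n, {subset Ln n <= JN} &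
     forall c d, c \in Ln n -> d \in Ln n -> (mulcN c d \in Ln n) && commN c d].
Proof. by move=> ln; have [_ _ _ Hs] := check_E_parts; apply: Hs; apply: Ln_in. Qed.
Lemma Ln_codes n c : n < 8 -> c \in Ln n -> c \in codesN.
Proof. by move=> ln cL; have [_ _ _ sJ _] := Ln_props ln; apply: JN_codes; apply: sJ. Qed.
Lemma HsetN_group n : n < 8 -> group_set (HsetN (Ln n)).
Proof.
move=> ln; have [_ _ eL sJ cl] := Ln_props ln.
apply/group_setP; split.
  by apply/HsetNP; exists ecN; [exact: eL | rewrite paffN1].
move=> x y /HsetNP[c cL ->] /HsetNP[d dL ->]; apply/HsetNP; exists (mulcN c d).
  by case/andP: (cl c d cL dL).
by rewrite paffN_M //; apply: (Ln_codes ln).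
Qed.
Lemma HnE n : n < 8 -> Hn n :=: HsetN (Ln n).
Proof. by move=> ln; rewrite /Hn /= gen_set_id //; apply: HsetN_group. Qed.
Lemma HsetN_sub L : HsetN L \subset S.
Proof. by apply/subsetP => x /HsetNP[c _ ->]; apply: paffN_in. Qed.
Lemma Hn_card n : n < 8 -> #|Hn n| = 16.
Proof.
move=> ln; have [sz uL _ _ _] := Ln_props ln.
by rewrite HnE // card_HsetN // => c; apply: Ln_codes.
Qed.
Lemma Hn_abelem n : n < 8 -> 2.-abelem (Hn n).
Proof.
move=> ln; have [_ _ _ sJ cl] := Ln_props ln.
apply/(abelemP (isT : prime 2)); rewrite HnE //; split.
  apply/centsP => x /HsetNP[c cL ->] y /HsetNP[d dL ->].
  rewrite /commute !paffN_M; try by apply: (Ln_codes ln).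
  by case/andP: (cl c d cL dL) => _ /eqP ->.
move=> x /HsetNP[c cL ->]; rewrite expgS expg1 paffN_M; try by apply: (Ln_codes ln).
by rewrite JN_sq ?paffN1 //; apply: sJ.
Qed.
Lemma Hn_inj n m : n < 8 -> m < 8 -> Hn n = Hn m -> n = m.
Proof.
move=> ln lm E.
have E' : HsetN (Ln n) = HsetN (Ln m) by rewrite -(HnE ln) -(HnE lm) E.
have /allP cd := check_dist_ok; have /allP := cd n (in_k8 ln).
move=> /(_ m (in_k8 lm)) /orP[/eqP //|/negP []].
apply/allP => c cL.
have : paffN c \in HsetN (Ln m) by rewrite -E'; apply/HsetNP; exists c.
case/HsetNP => d dL /paffN_inj; rewrite -/(Ln m).
by move=> -> //; [apply: (Ln_codes ln) | apply: (Ln_codes lm)].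
Qed.

End Part3.

Section Part4.
Opaque JN codesN commN mulcN ptsN Elist cls cj.
Local Open Scope group_scope.

Definition Os (l : seq nat) : {set {group {perm pt}}} := foldr (fun n A => Hn n |: A) set0 l.
Lemma mem_Os H l : (H \in Os l) = has (fun n => H == Hn n) l.
Proof. by elim: l => [|n l IH] /=; rewrite ?in_set0 // in_setU1 IH. Qed.
Lemma card_Os l : uniq l -> all (fun n => n < 8)%N l -> #|Os l| = size l.
Proof.
elim: l => [|n l IH] /=; first by rewrite cards0.
move=> /andP[nl ul] /andP[ln al]; rewrite cardsU1 IH // mem_Os.
suff -> : has (fun m => Hn n == Hn m) l = false by [].
apply/negbTE/hasP => -[m ml /eqP E].
have lm : (m < 8)%N by move/allP: al => /(_ m ml).
by move: nl; rewrite (Hn_inj ln lm E) ml.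
Qed.
Lemma Os_neq l l' n : (n < 8)%N -> n \in l -> n \notin l' -> all (fun n => n < 8)%N l' -> Os l != Os l'.
Proof.
move=> ln nl nl' al'; apply/negP => /eqP E.
have : Hn n \in Os l by rewrite mem_Os; apply/hasP; exists n.
rewrite E mem_Os => /hasP[m ml' /eqP E'].
have lm : (m < 8)%N by move/allP: al' => /(_ m ml').
by move: nl'; rewrite (Hn_inj ln lm E') ml'.
Qed.

Lemma E4subs_eq : E4subs = Os k8.
Proof.
apply/setP => H; rewrite /E4subs in_set mem_Os; apply/andP/hasP.
  case=> sHS; rewrite isog_elab => /andP[ab /eqP c16].
  have [L LE [HL _]] := classify sHS ab (eq_leq (esym c16)).
  exists (index L Elist).
    have [sz _ _ _] := check_E_parts; by rewrite mem_iota /= -sz index_mem.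
  apply/eqP; apply: val_inj => /=; rewrite HnE.
    by rewrite /Ln nth_index.
  by have [sz _ _ _] := check_E_parts; rewrite -sz index_mem.
case=> n; rewrite mem_iota /= => ln /eqP ->; split.
  by rewrite HnE //; apply: HsetN_sub.
by rewrite isog_elab Hn_abelem // Hn_card.
Qed.

Lemma check_cj_at n c : (n < 8)%N -> c \in codesN ->
  (cj n c < 8)%N /\ forall d, d \in Ln n -> conjcN d c \in Ln (cj n c).
Proof.
move=> ln cI; move/allP: check_cj_ok => /(_ n (in_k8 ln)) /allP /(_ c cI) /andP[lj /allP H].
split=> // d dL; rewrite -memcE; exact: H d dL.
Qed.

Lemma conj_Hn n c : (n < 8)%N -> c \in codesN -> (Hn n :^ paffN c)%G = Hn (cj n c).
Proof.
move=> ln cI; have [lj Hc] := check_cj_at ln cI.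
apply: val_inj => /=; rewrite (HnE ln) (HnE lj).
have [szn un _ _ _] := Ln_props ln; have [szj uj _ _ _] := Ln_props lj.
apply/eqP; rewrite eqEcard cardJg (card_HsetN un (fun d => @Ln_codes n d ln)).
rewrite (card_HsetN uj (fun d => @Ln_codes _ d lj)) szn szj leqnn andbT.
apply/subsetP => y; rewrite mem_conjg => /HsetNP[d dL yE].
have -> : y = paffN d ^ paffN c by rewrite -yE conjgKV.
have dI := Ln_codes ln dL.
have [iI _] := andP (check_invc cI).
apply/HsetNP; exists (conjcN d c); first exact: Hc.
by rewrite conjgE paffN_V // !paffN_M //; apply: mulcN_in.
Qed.

Transparent cls.
Lemma mem_cls n m : (m \in cls n) = (m \in map (cj n) codesN) && (m < 8)%N.
Proof. by rewrite /cls mem_filter mem_iota. Qed.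
Opaque cls.
Lemma orbit_Hn n : (n < 8)%N -> orbit 'JG S (Hn n) = Os (cls n).
Proof.
move=> ln; apply/setP => X; rewrite mem_Os; apply/imsetP/hasP.
  case=> g gS ->; have [c cI ->] := S_codes gS.
  exists (cj n c).
    have [lj _] := check_cj_at ln cI.
    by rewrite mem_cls lj andbT; apply: map_f.
  by apply/eqP; apply: conj_Hn.
case=> m; rewrite mem_cls => /andP[/mapP[c cI ->] _] /eqP ->.
by exists (paffN c); [apply: paffN_in | rewrite /= conj_Hn].
Qed.

End Part4.

Section Part5.
Opaque JN codesN commN mulcN ptsN Elist cls cj clsc.
Local Open Scope group_scope.

Definition cA := [:: 0; 5]%N.
Definition cB := [:: 1; 4]%N.
Definition cC := [:: 2; 3; 6; 7]%N.
Lemma cls_vals : [seq cls i | i <- k8] = [:: cA; cB; cC; cC; cB; cA; cC; cC].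
Proof.
have E : [seq clsc i | i <- k8] = [seq cls i | i <- k8] by apply: eq_map => i; apply: clscE.
by rewrite -E; apply/eqP; exact: check_cls_ok.
Qed.
Lemma cls_nth n : (n < 8)%N -> cls n = nth [::] [:: cA; cB; cC; cC; cB; cA; cC; cC] n.
Proof. by move=> ln; rewrite -cls_vals (nth_map 0) ?size_iota // nth_iota. Qed.
Lemma cls_in n : (n < 8)%N -> cls n \in [:: cA; cB; cC].
Proof.
move=> ln; rewrite (cls_nth ln).
by case: n ln => [|[|[|[|[|[|[|[|n]]]]]]]] ln.
Qed.
Lemma cls0 : cls 0 = cA. Proof. exact: (@cls_nth 0). Qed.
Lemma cls1 : cls 1 = cB. Proof. exact: (@cls_nth 1). Qed.
Lemma cls2 : cls 2 = cC. Proof. exact: (@cls_nth 2). Qed.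

Lemma E4classes_eq : E4classes = [set Os cA; Os cB; Os cC].
Proof.
apply/setP => X; apply/imsetP/idP.
  case=> H; rewrite E4subs_eq mem_Os => /hasP[n]; rewrite mem_iota /= => ln /eqP -> ->.
  rewrite orbit_Hn //; have := cls_in ln; rewrite !inE.
  by case/orP => [/eqP ->|/orP[/eqP ->|/eqP ->]]; rewrite eqxx ?orbT.
rewrite !inE => /orP[/orP[]|] /eqP ->.
- exists (Hn 0); last by rewrite orbit_Hn // cls0.
  by rewrite E4subs_eq mem_Os; apply/hasP; exists 0%N; rewrite ?mem_iota ?eqxx.
- exists (Hn 1); last by rewrite orbit_Hn // cls1.
  by rewrite E4subs_eq mem_Os; apply/hasP; exists 1%N; rewrite ?mem_iota ?eqxx.
- exists (Hn 2); last by rewrite orbit_Hn // cls2.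
  by rewrite E4subs_eq mem_Os; apply/hasP; exists 2%N; rewrite ?mem_iota ?eqxx.
Qed.

End Part5.

Opaque JN codesN commN mulcN ptsN Elist cls cj clsc.

Lemma card3 (T : finType) (a b c : T) : a != b -> a != c -> b != c -> #|[set a; b; c]| = 3.
Proof.
move=> ab ac bc.
have -> : [set a; b; c] = a |: (b |: [set c]) by apply/setP => x; rewrite !inE ?orbA.
rewrite !cardsU1 cards1 !inE.
by rewrite (negbTE ab) (negbTE ac) (negbTE bc).
Qed.
Lemma filt3 (T : finType) (f : T -> nat) (a b c : T) k :
  f a = k -> f b = k -> f c != k ->
  [set C in [set a; b; c] | f C == k] = [set a; b].
Proof.
move=> fa fb fc; apply/setP => X; rewrite !inE.
have [->|Xa] := eqVneq X a; first by rewrite fa eqxx.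
have [->|Xb] := eqVneq X b; first by rewrite fb eqxx.
have [->|Xc] := eqVneq X c; last by [].
by rewrite (negbTE fc).
Qed.
Lemma filt1 (T : finType) (f : T -> nat) (a b c : T) k :
  f a != k -> f b != k -> f c = k ->
  [set C in [set a; b; c] | f C == k] = [set c].
Proof.
move=> fa fb fc; apply/setP => X; rewrite !inE.
have [->|Xa] := eqVneq X a; first by rewrite (negbTE fa) andbF; apply/esym/negbTE; apply: contra fa => /eqP ->; rewrite fc.
have [->|Xb] := eqVneq X b; first by rewrite (negbTE fb) andbF; apply/esym/negbTE; apply: contra fb => /eqP ->; rewrite fc.
have [->|Xc] := eqVneq X c; first by rewrite fc eqxx orbT.
by [].
Qed.

Theorem corollary2p4 :
  (forall H : {group {perm pt}}, H \subset S -> ~~ (H \isog elab2 5))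
  /\ #|E4subs| = 8
  /\ #|E4classes| = 3
  /\ #|[set C in E4classes | #|C| == 2]| = 2
  /\ #|[set C in E4classes | #|C| == 4]| = 1.
Proof.
split.
  move=> H sHS; apply/negP; rewrite isog_elab => /andP[ab /eqP c32].
  have c16' : (16 <= #|H|)%N by rewrite c32.
  have [L _ [_ c16]] := classify sHS ab c16'.
  by rewrite c16 in c32.
split; first by rewrite E4subs_eq card_Os.
have nAB : Os cA != Os cB by apply: (@Os_neq _ _ 0).
have nAC : Os cA != Os cC by apply: (@Os_neq _ _ 0).
have nBC : Os cB != Os cC by apply: (@Os_neq _ _ 1).
have cAc : #|Os cA| = 2 by rewrite card_Os.
have cBc : #|Os cB| = 2 by rewrite card_Os.
have cCc : #|Os cC| = 4 by rewrite card_Os.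
rewrite E4classes_eq; split; first exact: (@card3 _ _ _ _ nAB nAC nBC).
split.
  rewrite (@filt3 _ (fun C : {set {group {perm pt}}} => #|C|) _ _ _ 2 cAc cBc); last by rewrite cCc.
  by rewrite cards2 nAB.
rewrite (@filt1 _ (fun C : {set {group {perm pt}}} => #|C|) _ _ _ 4); [exact: cards1 | by rewrite cAc | by rewrite cBc | exact: cCc].
Qed.
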